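(* Let $a_1\le a_2\le a_3\le a_4\le a_5$ be positive real numbers. Let $\sigma_0=(a_1,a_5,a_2,a_3,a_4)$ and $\sigma_1=(a_1,a_4,a_3,a_2,a_5)$. Then $\phi(\sigma_1)=\phi(\sigma_0)$, and for every tuple $(x_1,x_2,x_3,x_4,x_5)$ with $x_1=a_1$ and $(x_2,x_3,x_4,x_5)$ a permutation of $(a_2,a_3,a_4,a_5)$, we have $\phi(\sigma_0)\le\phi(x_1,x_2,x_3,x_4,x_5)$.
   Context: For real numbers $x_1,\dots,x_5$, define $\phi(x_1,x_2,x_3,x_4,x_5)=x_1x_2x_3+x_2x_3x_4+x_3x_4x_5+x_4x_5x_1+x_5x_1x_2$. *)

(* Defs.v *)
From Stdlib Require Import Reals List Permutation.
Open Scope R_scope.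

Definition phi (x1 x2 x3 x4 x5 : R) : R :=
  x1*x2*x3 + x2*x3*x4 + x3*x4*x5 + x4*x5*x1 + x5*x1*x2.

(* Main.v *)
Require Import Defs.
From Stdlib Require Import Reals List Permutation Lra Psatz.
Open Scope R_scope.

Lemma perm_pick (x : R) (r l : list R) :
  Permutation (x :: r) l -> exists l1 l2, l = l1 ++ x :: l2 /\ Permutation r (l1 ++ l2).
Proof.
  intro H. assert (Hin : In x l) by (eapply Permutation_in; [exact H| left; reflexivity]).
  destruct (in_split x l Hin) as [l1 [l2 E]]. subst l.
  exists l1, l2. split; [reflexivity|].
  apply Permutation_cons_inv with x. rewrite H. symmetry. apply Permutation_middle.
Qed.

Ltac solve_perm H :=
  lazymatch type of H with
  | Permutation nil _ => idtac
  | Permutation (_ :: _) _ =>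
    let l1 := fresh "l1" in let l2 := fresh "l2" in let E := fresh "E" in
    let H' := fresh "H" in
    destruct (perm_pick _ _ _ H) as [l1 [l2 [E H']]]; clear H;
    (destruct l1 as [|? [|? [|? [|? [|? ?]]]]]; simpl in E; try discriminate E;
     injection E; intros; subst; simpl in H'; solve_perm H')
  end.

Ltac pos_tac :=
  repeat first [ assumption | apply Rplus_le_le_0_compat | apply Rmult_le_pos
               | apply pow_le | lra ].

Theorem lemma1 (a1 a2 a3 a4 a5 : R) :
  0 < a1 -> a1 <= a2 -> a2 <= a3 -> a3 <= a4 -> a4 <= a5 ->
  phi a1 a4 a3 a2 a5 = phi a1 a5 a2 a3 a4 /\
  (forall x2 x3 x4 x5 : R,
     Permutation (x2 :: x3 :: x4 :: x5 :: nil) (a2 :: a3 :: a4 :: a5 :: nil) ->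
     phi a1 a5 a2 a3 a4 <= phi a1 x2 x3 x4 x5).
Proof.
  intros h1 h2 h3 h4 h5. split.
  - unfold phi; ring.
  - intros x2 x3 x4 x5 H.
    assert (Ep : a2 = a1 + (a2 - a1)) by ring. set (p := a2 - a1) in Ep. clearbody p.
    assert (Eq : a3 = a2 + (a3 - a2)) by ring. set (q := a3 - a2) in Eq. clearbody q.
    assert (Er : a4 = a3 + (a4 - a3)) by ring. set (r := a4 - a3) in Er. clearbody r.
    assert (Es : a5 = a4 + (a5 - a4)) by ring. set (s := a5 - a4) in Es. clearbody s.
    assert (hp : 0 <= p) by lra. assert (hq : 0 <= q) by lra.
    assert (hr : 0 <= r) by lra. assert (hs : 0 <= s) by lra.
    assert (ha : 0 <= a1) by lra.
    subst a5 a4 a3 a2. clear h2 h3 h4 h5.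
    solve_perm H; unfold phi;
    match goal with |- ?x <= ?y => cut (0 <= y - x); [lra|] end;
    ring_simplify; pos_tac.
Qed.
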